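(* Let $A\in\mathbb{R}^{m\times n}$ with $\operatorname{rk}(A)=m$ and $b\in\mathbb{R}^m$, and let $x$ be a basic (not necessarily nonnegative) solution of $Ax=b$, i.e. $Ax=b$ and $x_{[n]\setminus B}=\mathbb{0}$ for some $B\subseteq[n]$ such that the columns of $A_B$ form a basis. Then for every $z\in\mathbb{R}^n$ with $Az=b$, $\|x\|_\infty\le\kappa_A\|z\|_1$.
   Context: An elementary vector of $\ker(A)$ is a nonzero $g\in\ker(A)$ with inclusion-minimal support among nonzero vectors of $\ker(A)$. The circuit imbalance is $\kappa_A=\max\{|g_i|/|g_j|: g \text{ elementary},\ i,j\in\mathrm{supp}(g)\}$. *)

(* Defs.v *)
From HB Require Import structures.
From mathcomp Require Import all_boot all_order all_algebra.
From mathcomp Require Import boolp classical_sets reals.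
Set Implicit Arguments. Unset Strict Implicit. Unset Printing Implicit Defensive.
Import Order.TTheory GRing.Theory Num.Theory.
Local Open Scope ring_scope.
Local Open Scope classical_set_scope.

Section Defs.
Variable R : realType.

Definition supp n (g : 'cV[R]_n) : {set 'I_n} := [set i | g i 0 != 0].

Definition elementary m n (A : 'M[R]_(m, n)) (g : 'cV[R]_n) : Prop :=
  [/\ g != 0, A *m g = 0 &
      forall h : 'cV[R]_n, h != 0 -> A *m h = 0 -> ~ (supp h \proper supp g)].

(* Convention: if ker(A) = {0} (no elementary vectors) we take kappa_A = 1;
   otherwise the max is always >= 1, so Num.max 1 _ does not change it. *)
Definition kappa m n (A : 'M[R]_(m, n)) : R :=
  Num.max 1 (sup [set r : R | exists g i j, [/\ elementary A g,
      i \in supp g, j \in supp g & r = `|g i 0| / `|g j 0|]]).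

Definition colsB m n (A : 'M[R]_(m, n)) (B : {set 'I_n}) : 'M[R]_(m, #|B|) :=
  \matrix_(i < m, j < #|B|) A i (enum_val j).

Definition cols_basis m n (A : 'M[R]_(m, n)) (B : {set 'I_n}) : bool :=
  row_free (colsB A B)^T && row_full (colsB A B)^T.

Definition norm_inf n (x : 'cV[R]_n) : R := \big[Num.max/0]_(i < n) `|x i 0|.
Definition norm_one n (x : 'cV[R]_n) : R := \sum_(i < n) `|x i 0|.

End Defs.

(* Main.v *)
Require Import Defs.
From HB Require Import structures.
From mathcomp Require Import all_boot all_order all_algebra.
From mathcomp Require Import boolp classical_sets reals.
Import Order.TTheory GRing.Theory Num.Theory.
Local Open Scope ring_scope.

Lemma indepB (R : realType) m n (A : 'M[R]_(m, n)) (B : {set 'I_n}) (v : 'cV[R]_n) :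
  cols_basis A B -> (forall i, i \notin B -> v i 0 = 0) -> A *m v = 0 -> v = 0.
Proof.
move=> /andP[fr _] vB Av.
pose c : 'cV[R]_#|B| := \col_l v (enum_val l) 0.
have Hc : colsB A B *m c = 0.
  apply/matrixP => r k; rewrite (ord1 k).
  transitivity ((A *m v) r 0); last by rewrite Av.
  rewrite !mxE.
  rewrite (bigID (fun i => i \in B)) /= [X in _ + X]big1 ?addr0; last first.
    by move=> i /vB ->; rewrite mulr0.
  by rewrite [RHS]big_enum_val; apply: eq_bigr => l _; rewrite !mxE.
have c0 : c = 0.
  apply: trmx_inj; apply: (row_free_inj fr).
  by rewrite trmx0 mul0mx -trmx_mul Hc trmx0.
apply/matrixP => k j; rewrite (ord1 j) mxE.
case: (boolP (k \in B)) => kB; last exact: vB.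
have := congr1 (fun M : 'cV[R]_#|B| => M (enum_rank_in kB k) 0) c0.
by rewrite !mxE enum_rankK_in.
Qed.

Lemma exG (R : realType) m n (A : 'M[R]_(m, n)) (B : {set 'I_n}) :
  cols_basis A B -> exists G : 'M[R]_n, A *m G = A /\ forall k j, k \notin B -> G k j = 0.
Proof.
move=> /andP[_ /row_fullP[D HD]].
pose E : 'M[R]_(n, #|B|) := \matrix_(k, l) (k == enum_val l)%:R.
have HE : colsB A B = A *m E.
  apply/matrixP => r l; rewrite !mxE (bigD1 (enum_val l)) //= mxE eqxx mulr1.
  rewrite big1 ?addr0 // => k /negbTE kl; by rewrite mxE kl mulr0.
exists (E *m D^T *m A); split.
  rewrite !mulmxA -HE.
  have -> : colsB A B *m D^T = 1%:M by rewrite -[colsB A B]trmxK -trmx_mul HD trmx1.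
  by rewrite mul1mx.
move=> k j kB; rewrite mxE big1 // => l _; rewrite mxE big1 ?mul0r // => l' _.
rewrite mxE; case: eqP => [e|]; last by rewrite mul0r.
by move: kB; rewrite e enum_valP.
Qed.

Lemma elem_mult (R : realType) m n (A : 'M[R]_(m, n)) (g g' : 'cV[R]_n) :
  elementary A g -> elementary A g' -> supp g = supp g' -> exists c, g' = c *: g.
Proof.
move=> [g0 Ag _] [g'0 Ag' min'] Hs.
have [j gj] : exists j, g j 0 != 0.
  apply/existsP; move: g0; apply: contraR; rewrite negb_exists => /forallP H.
  by apply/eqP/matrixP => k l; rewrite (ord1 l) mxE; apply/eqP; have := H k; rewrite negbK.
pose c := g' j 0 / g j 0.
exists c; apply/eqP; rewrite -subr_eq0; case: eqP => // /eqP h0.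
have Ah : A *m (g' - c *: g) = 0 by rewrite mulmxBr -scalemxAr Ag Ag' scaler0 subr0.
exfalso; apply: (min' _ h0 Ah); apply/properP; split.
  apply/fintype.subsetP => k; rewrite inE !mxE; apply: contraR => gk.
  have : k \notin supp g by rewrite Hs.
  rewrite !inE !negbK in gk *.
  by move/eqP ->; rewrite (eqP gk) mulr0 subr0.
exists j; first by rewrite -Hs inE.
by rewrite inE !mxE /c divfK // subrr eqxx.
Qed.

Lemma ratio_le_kappa (R : realType) m n (A : 'M[R]_(m, n)) (g : 'cV[R]_n) i j :
  elementary A g -> i \in supp g -> j \in supp g -> `|g i 0| / `|g j 0| <= kappa A.
Proof.
move=> eg ig jg.
have H : forall p : {set 'I_n} * 'I_n * 'I_n, exists M : R, forall h, elementary A h ->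
    supp h = p.1.1 -> `|h p.1.2 0| / `|h p.2 0| <= M.
  move=> [[T a] b] /=.
  case: (pselect (exists h0, elementary A h0 /\ supp h0 = T)) => [[h0 [e0 s0]]|nex].
    exists (`|h0 a 0| / `|h0 b 0|) => h eh sh.
    have [c ->] := @elem_mult _ _ _ _ _ _ e0 eh (etrans s0 (esym sh)).
    rewrite !mxE !normrM.
    have [->|c0] := eqVneq `|c| 0; first by rewrite !mul0r ?invr0 ?mulr0 ?divr_ge0.
    by rewrite -mulf_div divff // mul1r.
  by exists 0 => h eh sh; exfalso; apply: nex; exists h.
have [f Hf] := choice H.
rewrite /kappa le_max; apply/orP; right.
apply: ub_le_sup; last by exists g, i, j.
exists (\sum_p `|f p|) => r [h [a [b [eh _ _ ->]]]].
apply: le_trans (Hf (supp h, a, b) h eh erefl) _.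
apply: le_trans (ler_norm _) _.
by rewrite (bigD1 (supp h, a, b)) //= lerDl sumr_ge0.
Qed.

Arguments indepB {R m n A B v}.
Arguments exG {R m n A B}.
Arguments ratio_le_kappa {R m n A g i j}.

Theorem corollary2p8 (R : realType) (m n : nat) (A : 'M[R]_(m, n))
    (b : 'cV[R]_m) (x : 'cV[R]_n) :
  \rank A = m ->
  A *m x = b ->
  (exists B : {set 'I_n},
      cols_basis A B /\ (forall i : 'I_n, i \notin B -> x i 0 = 0)) ->
  forall z : 'cV[R]_n, A *m z = b -> norm_inf x <= kappa A * norm_one z.
Proof.
move=> _ Ax [B [bas xB]] z Az.
have [G [AG G0]] := exG bas.
have k1 : 1 <= kappa A by rewrite /kappa le_max lexx.
have k0 : 0 <= kappa A by apply: le_trans k1.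
have xGz : x = G *m z.
  apply/eqP; rewrite -subr_eq0; apply/eqP; apply: (indepB bas).
    move=> i iB; rewrite !mxE xB // big1 ?subr0 // => j _.
    by rewrite G0 // mul0r.
  by rewrite mulmxBr mulmxA AG Ax Az subrr.
have Gle : forall i j, `|G i j| <= kappa A.
  move=> i j.
  pose g : 'cV[R]_n := \col_k (G k j - (k == j)%:R).
  have Ag : A *m g = 0.
    apply/matrixP => r c; rewrite !mxE.
    under eq_bigr do rewrite mxE mulrBr.
    rewrite sumrB.
    have := congr1 (fun M : 'M[R]_(m, n) => M r j) AG; rewrite mxE => ->.
    rewrite (bigD1 j) //= eqxx mulr1 big1 ?addr0 ?subrr // => k /negbTE ->.
    by rewrite mulr0.
  case: (boolP (j \in B)) => jB.
    have g0 : g = 0.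
      apply: (indepB bas) => // k kB; rewrite mxE G0 //.
      by case: eqP => [e|_]; [move: kB; rewrite e jB | rewrite subr0].
    have := congr1 (fun M : 'cV[R]_n => M i 0) g0; rewrite !mxE => /eqP.
    rewrite subr_eq0 => /eqP ->; apply: le_trans k1.
    by case: (i == j); rewrite ?normr1 ?normr0.
  have [->|Gij] := eqVneq (G i j) 0; first by rewrite normr0.
  have gj : g j 0 = -1 by rewrite mxE G0 // eqxx sub0r.
  have gi : g i 0 = G i j.
    rewrite mxE; case: eqP => [e|_]; last by rewrite subr0.
    by move: Gij; rewrite e G0 // eqxx.
  have gout : forall k, k \notin B -> k != j -> g k 0 = 0.
    by move=> k kB /negbTE kj; rewrite mxE G0 // kj subr0.
  clearbody g.
  have eg : elementary A g.
    split => //.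
      apply/eqP => /matrixP /(_ j 0); rewrite gj mxE => /eqP.
      by rewrite oppr_eq0 oner_eq0.
    move=> h h0 Ah /properP [sub [k kg kh]].
    have hout : forall k, k \notin B -> k != j -> h k 0 = 0.
      move=> k' k'B k'j; apply/eqP; apply: contraR (k'B) => hk.
      have : k' \in supp g by apply: (fintype.subsetP sub); rewrite inE.
      by rewrite inE (gout k' k'B k'j) eqxx.
    have [hj|hj] := eqVneq (h j 0) 0.
      suff : h = 0 by move/eqP; rewrite (negbTE h0).
      apply: (indepB bas) => // k' k'B.
      by have [->|k'j] := eqVneq k' j; [ | rewrite hout].
    pose h' := h + h j 0 *: g.
    have h'0 : h' = 0.
      apply: (indepB bas).
        move=> k' k'B; rewrite !mxE.
        have [->|k'j] := eqVneq k' j; first by rewrite gj mulrN1 subrr.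
        by rewrite (hout k' k'B k'j) (gout k' k'B k'j) mulr0 addr0.
      by rewrite mulmxDr -scalemxAr Ah Ag scaler0 addr0.
    move: kh; rewrite inE negbK => /eqP hk.
    have := congr1 (fun M : 'cV[R]_n => M k 0) h'0.
    rewrite !mxE hk add0r => /eqP; rewrite mulf_eq0 (negbTE hj) /=.
    by move: kg; rewrite inE => /negbTE ->.
  have := ratio_le_kappa eg (_ : i \in supp g) (_ : j \in supp g).
  rewrite gi gj normrN normr1 divr1; apply.
    by rewrite inE gi.
  by rewrite inE gj oppr_eq0 oner_eq0.
rewrite /norm_inf /norm_one; apply: bigmax_le => [|i _].
  by rewrite mulr_ge0 // sumr_ge0.
rewrite xGz mxE mulr_sumr; apply: le_trans (ler_norm_sum _ _ _) _.
apply: ler_sum => j _; rewrite normrM.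
by rewrite ler_wpM2r.
Qed.
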